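(* Let $(M,J)$ be an almost complex manifold and $\nabla$ an affine connection on $M$, and let $G^\nabla$ be the $(1,2)$-tensor $G^\nabla(X,Y):=-\frac12J(\nabla_YJ)X$ (in indices $G^b{}_{ca}=\frac12(\nabla_aJ^b{}_d)J^d{}_c$). The following are equivalent: (i) $\nabla$ is compatible with $J$, i.e. $\nabla_aJ^a{}_b=0$; (ii) $G^\nabla$ is trace-free; (iii) $JG^\nabla$ (the tensor $(X,Y)\mapsto JG^\nabla(X,Y)$) is trace-free; (iv) the tensor $(X,Y)\mapsto G^\nabla(X,JY)$ is trace-free; (v) the tensor $(X,Y)\mapsto G^\nabla(JX,JY)$ is trace-free.
   Context: $J$ is an endomorphism of $TM$ with $J^2=-\mathrm{id}$; abstract index notation is used, with $J^a{}_b$ denoting $J$ and repeated indices indicating contraction. A $(1,2)$-tensor $H^a{}_{bc}$ is called trace-free if both contractions $H^a{}_{ab}$ and $H^a{}_{ba}$ vanish. *)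

(* Defs.v *)
From HB Require Import structures.
From mathcomp Require Import all_boot all_order all_algebra.
From mathcomp Require Import all_classical all_reals all_analysis.
Set Implicit Arguments. Unset Strict Implicit. Unset Printing Implicit Defensive.
Import Order.TTheory GRing.Theory Num.Theory.
Import numFieldNormedType.Exports.
Local Open Scope ring_scope.

(* Local-coordinate model on an open chart U of R^n (coordinates x : 'rV[R]_n).
   A (1,1)-tensor field is given by components  J b d x  = J^b_d(x);
   an affine connection by its Christoffel symbols  Gam b a e x = Gamma^b_{ae}(x),
   so that  nabla_a V^b = d_a V^b + Gamma^b_{ae} V^e.
   A (1,2)-tensor (at a point) is  H : 'I_n -> 'I_n -> 'I_n -> R  with
   H b c a = H^b_{ca}. *)

Section Defs.
Variables (R : realType) (n : nat).

Definition coord_dir (a : 'I_n) : 'rV[R]_n := delta_mx 0 a.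

(* nablaJ J Gam x a b d = (nabla_a J)^b_d at x *)
Definition nablaJ (J : 'I_n -> 'I_n -> 'rV[R]_n -> R)
  (Gam : 'I_n -> 'I_n -> 'I_n -> 'rV[R]_n -> R) (x : 'rV[R]_n)
  (a b d : 'I_n) : R :=
  derive (J b d) x (coord_dir a)
  + \sum_(e < n) Gam b a e x * J e d x
  - \sum_(e < n) Gam e a d x * J b e x.

Definition compatible J Gam (x : 'rV[R]_n) : Prop :=
  forall b : 'I_n, \sum_(a < n) nablaJ J Gam x a a b = 0.

Definition trace_free (H : 'I_n -> 'I_n -> 'I_n -> R) : Prop :=
  forall b : 'I_n, \sum_(a < n) H a a b = 0 /\ \sum_(a < n) H a b a = 0.

Definition Gtensor J Gam x : 'I_n -> 'I_n -> 'I_n -> R :=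
  fun b c a => 2^-1 * \sum_(d < n) nablaJ J Gam x a b d * J d c x.

Definition JG J Gam x : 'I_n -> 'I_n -> 'I_n -> R :=
  fun b c a => \sum_(e < n) J b e x * Gtensor J Gam x e c a.

Definition G_XJY J Gam x : 'I_n -> 'I_n -> 'I_n -> R :=
  fun b c a => \sum_(e < n) Gtensor J Gam x b c e * J e a x.

Definition G_JXJY J Gam x : 'I_n -> 'I_n -> 'I_n -> R :=
  fun b c a => \sum_(d < n) \sum_(e < n) Gtensor J Gam x b d e * J d c x * J e a x.

Definition almost_complex_at (J : 'I_n -> 'I_n -> 'rV[R]_n -> R) x : Prop :=
  forall b c : 'I_n, \sum_(d < n) J b d x * J d c x = - (b == c)%:R.

End Defs.

(* Main.v *)
Require Import Defs.
From HB Require Import structures.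
From mathcomp Require Import all_boot all_order all_algebra.
From mathcomp Require Import all_classical all_reals all_analysis.
From mathcomp Require Import lra ring.
Import Order.TTheory GRing.Theory Num.Theory.
Local Open Scope ring_scope.
Import numFieldNormedType.Exports.
Section Alg.
Variables (R : realType) (n : nat) (J : 'M[R]_n) (N : 'I_n -> 'M[R]_n).
Hypothesis HJ : J *m J = - 1%:M.
Hypothesis HA : forall a, N a *m J = - (J *m N a).

Lemma trNJ a : \tr (N a *m J) = 0.
Proof.
have h : \tr (N a *m J) = - \tr (N a *m J).
  by rewrite {1}HA raddfN mxtrace_mulC.
lra.
Qed.

Lemma NJJ a : N a *m J *m J = - N a.
Proof. by rewrite -mulmxA HJ mulmxN mulmx1. Qed.

Lemma trN a : \tr (N a) = 0.
Proof.
have h : \tr (N a *m J *m J) = - \tr (N a *m J *m J).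
  by rewrite {1}HA mulNmx raddfN mxtrace_mulC mulmxA.
have h2 : \tr (N a *m J *m J) = 0 by lra.
by move: h2; rewrite NJJ raddfN => /eqP; rewrite oppr_eq0 => /eqP.
Qed.

Lemma JNJ a : J *m N a *m J = N a.
Proof. by rewrite -mulmxA HA mulmxN mulmxA HJ mulNmx mul1mx opprK. Qed.

Definition Cv : 'rV[R]_n := \row_d \sum_(a < n) N a a d.

Lemma CvJ_eq0 : (forall b, (Cv *m J) 0 b = 0) <-> (forall b, Cv 0 b = 0).
Proof.
split=> h b.
  have e : Cv = - (Cv *m J *m J) by rewrite -mulmxA HJ mulmxN mulmx1 opprK.
  rewrite e; have -> : Cv *m J = 0 by apply/matrixP => i j; rewrite ord1 h mxE.
  by rewrite mul0mx oppr0 mxE.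
have -> : Cv = 0 by apply/matrixP => i j; rewrite ord1 h mxE.
by rewrite mul0mx mxE.
Qed.

Lemma sumNJ b : \sum_(e < n) (N e *m J) e b = (Cv *m J) 0 b.
Proof.
rewrite mxE; under eq_bigr do rewrite mxE.
under [RHS]eq_bigr do rewrite mxE big_distrl /=.
by rewrite exchange_big.
Qed.

End Alg.
Section Alg2.
Local Notation CV := (@Cv _ _).
Variables (R : realType) (n : nat) (jf : 'I_n -> 'I_n -> R)
  (D g : 'I_n -> 'I_n -> 'I_n -> R).
Let nf a b d := D a b d + \sum_(e < n) g a b e * jf e d - \sum_(e < n) g a e d * jf b e.
Hypothesis HJf : forall b c, \sum_(d < n) jf b d * jf d c = - (b == c)%:R.
Hypothesis HD : forall a b c,
  \sum_(d < n) (D a b d * jf d c + jf b d * D a d c) = 0.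

Definition Jm : 'M[R]_n := \matrix_(i, j) jf i j.
Definition Nm a : 'M[R]_n := \matrix_(i, j) nf a i j.
Definition Dm a : 'M[R]_n := \matrix_(i, j) D a i j.
Definition Gm a : 'M[R]_n := \matrix_(i, j) g a i j.

Lemma HJm : Jm *m Jm = - 1%:M.
Proof.
apply/matrixP => b c; rewrite !mxE -HJf; apply: eq_bigr => d _; by rewrite !mxE.
Qed.

Lemma Nm_dec a : Nm a = Dm a + Gm a *m Jm - Jm *m Gm a.
Proof.
apply/matrixP => b d; rewrite !mxE /nf; congr (_ + _ - _).
- by apply: eq_bigr => e _; rewrite !mxE.
- by apply: eq_bigr => e _; rewrite !mxE mulrC.
Qed.

Lemma HDm a : Dm a *m Jm + Jm *m Dm a = 0.
Proof.
apply/matrixP => b c; rewrite !mxE -[RHS](HD a b c) big_split /=.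
by congr (_ + _); apply: eq_bigr => d _; rewrite !mxE.
Qed.

Lemma HAm a : Nm a *m Jm = - (Jm *m Nm a).
Proof.
apply/eqP; rewrite -addr_eq0 Nm_dec.
have e1 : Gm a *m Jm *m Jm = - Gm a by rewrite -mulmxA HJm mulmxN mulmx1.
have e2 : Jm *m (Jm *m Gm a) = - Gm a by rewrite mulmxA HJm mulNmx mul1mx.
have e3 : Jm *m Gm a *m Jm = Jm *m (Gm a *m Jm) by rewrite mulmxA.
rewrite !mulmxDl !mulmxDr !mulNmx !mulmxN e1 e2 e3.
move: (HDm a).
set A := Dm a *m Jm; set B := Jm *m Dm a; set C := Jm *m (Gm a *m Jm).
move=> h; apply/eqP/matrixP => i j.
have := congr1 (fun M : 'M[R]_n => M i j) h; rewrite !mxE => h'.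
lra.
Qed.

Definition Ccond := forall b, \sum_(a < n) nf a a b = 0.

Lemma CvE b : CV Nm 0 b = \sum_(a < n) nf a a b.
Proof. by rewrite mxE; apply: eq_bigr => a _; rewrite mxE. Qed.

Lemma mE a b c : \sum_(d < n) nf a b d * jf d c = (Nm a *m Jm) b c.
Proof. by rewrite mxE; apply: eq_bigr => d _; rewrite !mxE. Qed.

Lemma half_eq0 (t : R) : 2^-1 * t = 0 <-> t = 0.
Proof. split; [move=> h; lra | move=> ->; lra]. Qed.

Lemma Ccond_Cv : Ccond <-> (forall b, CV Nm 0 b = 0).
Proof. by split=> h b; [rewrite CvE | rewrite -CvE]. Qed.

Lemma Ccond_CvJ : Ccond <-> (forall b, (CV Nm *m Jm) 0 b = 0).
Proof. rewrite Ccond_Cv; exact: iff_sym (@CvJ_eq0 _ _ Jm Nm HJm). Qed.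

Lemma tf_G : trace_free (fun b c a => 2^-1 * \sum_(d < n) nf a b d * jf d c) <-> Ccond.
Proof.
rewrite (_ : (fun b c a => _) = fun b c a => 2^-1 * (Nm a *m Jm) b c); last first.
  by apply/funext => b; apply/funext => c; apply/funext => a; rewrite mE.
rewrite Ccond_CvJ; split => h b.
  have [_ h2] := h b; move: h2; rewrite -mulr_sumr (@sumNJ _ _ Jm Nm) => /half_eq0 //.
split; rewrite -mulr_sumr; apply/half_eq0.
  exact: (@trNJ _ _ Jm Nm HAm b).
by rewrite (@sumNJ _ _ Jm Nm).
Qed.

Lemma trE (A : 'M[R]_n) : \sum_i A i i = \tr A.
Proof. by []. Qed.

Lemma tf_JG : trace_free (fun b c a => \sum_(e < n) jf b e * (2^-1 * \sum_(d < n) nf a e d * jf d c)) <-> Ccond.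
Proof.
rewrite (_ : (fun b c a => _) = fun b c a => 2^-1 * Nm a b c); last first.
  apply/funext => b; apply/funext => c; apply/funext => a.
  rewrite -(@JNJ _ _ Jm Nm HJm HAm a) -mulmxA [in RHS]mxE mulr_sumr.
  by apply: eq_bigr => e _; rewrite mE [Jm b e]mxE mulrCA.
rewrite Ccond_Cv; split => h b.
  have [_ h2] := h b; move: h2; rewrite -mulr_sumr => /half_eq0 <-.
  by rewrite mxE.
split; rewrite -mulr_sumr; apply/half_eq0.
  by rewrite trE (@trN _ _ Jm Nm HJm HAm).
by move: (h b); rewrite mxE.
Qed.

Lemma tf_XJY : trace_free (fun b c a => \sum_(e < n) (2^-1 * \sum_(d < n) nf e b d * jf d c) * jf e a) <-> Ccond.
Proof.
rewrite (_ : (fun b c a => _) = fun b c a => 2^-1 * \sum_(e < n) (Nm e *m Jm) b c * Jm e a); last first.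
  apply/funext => b; apply/funext => c; apply/funext => a.
  by rewrite mulr_sumr; apply: eq_bigr => e _; rewrite mE [Jm e a]mxE mulrA.
have t2 : forall b, \sum_(a < n) 2^-1 * \sum_(e < n) (Nm e *m Jm) a b * Jm e a
   = 2^-1 * CV Nm 0 b.
  move=> b; rewrite -mulr_sumr exchange_big mxE; congr (_ * _).
  apply: eq_bigr => e _ /=.
  rewrite -[in RHS](@JNJ _ _ Jm Nm HJm HAm e) -mulmxA [in RHS]mxE.
  by apply: eq_bigr => a _; rewrite mulrC.
rewrite Ccond_Cv; split => h b.
  have [_ h2] := h b; move: h2; rewrite t2 => /half_eq0 //.
split; last by rewrite t2 h mulr0.
rewrite -mulr_sumr exchange_big /=; apply/half_eq0.
under eq_bigr do rewrite -mulr_suml trE (@trNJ _ _ Jm Nm HAm) mul0r.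
by rewrite big1.
Qed.

Lemma tf_JXJY : trace_free (fun b c a => \sum_(d < n) \sum_(e < n)
    (2^-1 * \sum_(f < n) nf e b f * jf f d) * jf d c * jf e a) <-> Ccond.
Proof.
rewrite (_ : (fun b c a => _) = fun b c a => - (2^-1 * \sum_(e < n) Nm e b c * Jm e a)); last first.
  apply/funext => b; apply/funext => c; apply/funext => a.
  rewrite exchange_big /= mulr_sumr -sumrN; apply: eq_bigr => e _.
  have -> : Nm e b c = - (Nm e *m Jm *m Jm) b c.
    by rewrite (@NJJ _ _ Jm Nm HJm) [in RHS]mxE opprK.
  rewrite [(Nm e *m Jm *m Jm) b c]mxE mulNr mulrN opprK mulr_suml mulr_sumr.
  apply: eq_bigr => d _; rewrite mE [Jm d c]mxE [Jm e a]mxE; ring.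
have t2 : forall b, \sum_(a < n) - (2^-1 * \sum_(e < n) Nm e a b * Jm e a)
   = 2^-1 * (CV Nm *m Jm) 0 b.
  move=> b; rewrite -(@sumNJ _ _ Jm Nm) sumrN -mulr_sumr exchange_big -mulrN -sumrN.
  congr (_ * _); apply: eq_bigr => e _ /=.
  rewrite (@HAm e) mxE mxE; congr (- _); apply: eq_bigr => a _; rewrite mulrC //.
rewrite Ccond_CvJ; split => h b.
  have [_ h2] := h b; move: h2; rewrite t2 => /half_eq0 //.
split; last by rewrite t2 h mulr0.
rewrite sumrN -mulr_sumr exchange_big /=; apply/eqP; rewrite oppr_eq0; apply/eqP/half_eq0.
under eq_bigr do rewrite -mulr_suml trE (@trN _ _ Jm Nm HJm HAm) mul0r.
by rewrite big1.
Qed.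

End Alg2.
Lemma anal (R : realType) (n : nat) (U : set 'rV[R]_n)
  (J : 'I_n -> 'I_n -> 'rV[R]_n -> R) x v b c :
  open U -> U x ->
  (forall x, U x -> almost_complex_at J x) ->
  (forall x b d, U x -> differentiable (J b d) x) ->
  \sum_(d < n) ('D_v (J b d) x * J d c x + J b d x * 'D_v (J d c) x) = 0.
Proof.
move=> oU Ux HJ Hd.
have dv : forall b d, derivable (J b d) x v by move=> b0 d0; apply: diff_derivable; apply: Hd.
have E : 'D_v (\sum_(d < n) (J b d * J d c)) x = 0.
  rewrite (@near_eq_derive R _ R^o _ (cst (- (b == c)%:R : R))) ?derive_cst //.
  have : nbhs x U by exact: (@open_nbhs_nbhs _ x U (conj oU Ux)).
  apply: filterS => y Uy; rewrite -(HJ y Uy b c) fct_sumE; apply: eq_bigr => d _ //.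
rewrite -[RHS]E derive_sum; last by move=> d; apply: derivableM.
apply: eq_bigr => d _; rewrite deriveM // /GRing.scale /= addrC mulrC; congr (_ + _); by rewrite mulrC.
Qed.

Local Open Scope classical_set_scope.

Theorem lemma2p9 (R : realType) (n : nat) (U : set 'rV[R]_n)
  (J : 'I_n -> 'I_n -> 'rV[R]_n -> R)
  (Gam : 'I_n -> 'I_n -> 'I_n -> 'rV[R]_n -> R) :
  open U ->
  (forall x, U x -> almost_complex_at J x) ->
  (forall x b d, U x -> differentiable (J b d) x) ->
  [<-> (forall x, U x -> compatible J Gam x);
       (forall x, U x -> trace_free (Gtensor J Gam x));
       (forall x, U x -> trace_free (JG J Gam x));
       (forall x, U x -> trace_free (G_XJY J Gam x));
       (forall x, U x -> trace_free (G_JXJY J Gam x))].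
Proof.
move=> oU HJ Hd.
have HD x (Ux : U x) : forall a b c, \sum_(d < n)
   (derive (J b d) x (@coord_dir R n a) * J d c x + J b d x * derive (J d c) x (@coord_dir R n a)) = 0.
  by move=> a b c; exact: (@anal R n U J x (@coord_dir R n a) b c oU Ux HJ Hd).
have e1 x (Ux : U x) : trace_free (Gtensor J Gam x) <-> compatible J Gam x :=
  @tf_G R n (fun i j => J i j x) (fun a b d => derive (J b d) x (@coord_dir R n a))
     (fun a b e => Gam b a e x) (HJ x Ux) (HD x Ux).
have e2 x (Ux : U x) : trace_free (JG J Gam x) <-> compatible J Gam x :=
  @tf_JG R n (fun i j => J i j x) (fun a b d => derive (J b d) x (@coord_dir R n a))
     (fun a b e => Gam b a e x) (HJ x Ux) (HD x Ux).
have e3 x (Ux : U x) : trace_free (G_XJY J Gam x) <-> compatible J Gam x :=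
  @tf_XJY R n (fun i j => J i j x) (fun a b d => derive (J b d) x (@coord_dir R n a))
     (fun a b e => Gam b a e x) (HJ x Ux) (HD x Ux).
have e4 x (Ux : U x) : trace_free (G_JXJY J Gam x) <-> compatible J Gam x :=
  @tf_JXJY R n (fun i j => J i j x) (fun a b d => derive (J b d) x (@coord_dir R n a))
     (fun a b e => Gam b a e x) (HJ x Ux) (HD x Ux).
split; [|split; [|split; [|split]]] => h x Ux.
- by apply/(e1 x Ux)/h.
- by apply/(e2 x Ux)/(e1 x Ux)/h.
- by apply/(e3 x Ux)/(e2 x Ux)/h.
- by apply/(e4 x Ux)/(e3 x Ux)/h.
- by apply/(e4 x Ux)/h.
Qed.
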